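(* Let $X \subseteq 2^\omega$ be nice. Then for every Borel function $x \mapsto \langle Y^x, f^x\rangle$ from $2^\omega$ to $[\omega]^\omega \times \omega^\omega$ there exists $g \in \omega^\omega$ such that for every $x \in X$ there are infinitely many $n \in Y^x$ with $f^x(n) = g(n)$.
   Context: $[\omega]^\omega$ denotes the set of infinite subsets of $\omega$, viewed as a subspace of $2^\omega$. A set $X \subseteq 2^\omega$ is nice if for every Borel function $x \mapsto f^x$ from $2^\omega$ to $\omega^\omega$ there exists $g \in \omega^\omega$ such that for every $x \in X$ there are infinitely many $n$ with $f^x(n) = g(n)$. *)

(* Defs.v *)
(* Cantor space 2^omega = nat -> bool, Baire space omega^omega = nat -> nat. *)
From Stdlib Require Import Arith.

Inductive sigma_gen {T : Type} (G : (T -> Prop) -> Prop) : (T -> Prop) -> Prop :=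
| sg_base (A : T -> Prop) : G A -> sigma_gen G A
| sg_compl (A : T -> Prop) : sigma_gen G A -> sigma_gen G (fun x => ~ A x)
| sg_union (A : nat -> T -> Prop) :
    (forall n, sigma_gen G (A n)) -> sigma_gen G (fun x => exists n, A n x)
| sg_ext (A B : T -> Prop) :
    (forall x, A x <-> B x) -> sigma_gen G A -> sigma_gen G B.

(* Borel sets of 2^omega: generated by the subbasic clopen sets {x | x n = b}
   (the product topology is second countable, so this is the Borel sigma-algebra). *)
Definition cantor_subbasic (A : (nat -> bool) -> Prop) : Prop :=
  exists n b, forall x, A x <-> x n = b.
Definition borel_cantor := sigma_gen cantor_subbasic.

Definition prod_subbasic (A : (nat -> bool) * (nat -> nat) -> Prop) : Prop :=
  (exists n b, forall p, A p <-> fst p n = b) \/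
  (exists n k, forall p, A p <-> snd p n = k).
Definition borel_prod := sigma_gen prod_subbasic.

Definition baire_subbasic (A : (nat -> nat) -> Prop) : Prop :=
  exists n k, forall f, A f <-> f n = k.
Definition borel_baire := sigma_gen baire_subbasic.

Definition borel_fun_baire (F : (nat -> bool) -> (nat -> nat)) : Prop :=
  forall B, borel_baire B -> borel_cantor (fun x => B (F x)).
Definition borel_fun_prod (F : (nat -> bool) -> (nat -> bool) * (nat -> nat)) : Prop :=
  forall B, borel_prod B -> borel_cantor (fun x => B (F x)).

(* y : nat -> bool, viewed as a subset of omega, is infinite, i.e. y in [omega]^omega. *)
Definition infinite_set (y : nat -> bool) : Prop :=
  forall N, exists n, N <= n /\ y n = true.

Definition nice (X : (nat -> bool) -> Prop) : Prop :=
  forall F : (nat -> bool) -> (nat -> nat), borel_fun_baire F ->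
  exists g : nat -> nat, forall x, X x ->
    forall N, exists n, N <= n /\ F x n = g n.

(* Main.v *)
Require Import Defs.
From Stdlib Require Import Arith.
From Stdlib Require Import Bool List Lia Classical IndefiniteDescription Cantor.
Import ListNotations.

Lemma bc_ext (A B : (nat -> bool) -> Prop) :
  (forall x, A x <-> B x) -> borel_cantor A -> borel_cantor B.
Proof. intros H HA; eapply sg_ext; eauto. Qed.
Lemma bc_compl (A : (nat -> bool) -> Prop) : borel_cantor A -> borel_cantor (fun x => ~ A x).
Proof. intros; apply sg_compl; auto. Qed.
Lemma bc_union (A : nat -> (nat->bool) -> Prop) :
  (forall n, borel_cantor (A n)) -> borel_cantor (fun x => exists n, A n x).
Proof. intros; apply sg_union; auto. Qed.
Lemma bc_base : borel_cantor (fun x => x 0 = true).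
Proof. apply sg_base. exists 0, true. tauto. Qed.

Lemma bc_or (A B : (nat -> bool) -> Prop) :
  borel_cantor A -> borel_cantor B -> borel_cantor (fun x => A x \/ B x).
Proof.
  intros HA HB.
  apply bc_ext with (A := fun x => exists n, (fun n x => match n with 0 => A x | _ => B x end) n x).
  - intros x; split.
    + intros [[|n] H]; auto.
    + intros [H|H]; [exists 0 | exists 1]; auto.
  - apply bc_union. intros [|n]; auto.
Qed.
Lemma bc_all : borel_cantor (fun _ => True).
Proof.
  apply bc_ext with (A := fun x => x 0 = true \/ ~ x 0 = true).
  - intros x; split; auto. intros _. apply classic.
  - apply bc_or; [apply bc_base | apply bc_compl, bc_base].
Qed.
Lemma bc_none : borel_cantor (fun _ => False).
Proof.
  apply bc_ext with (A := fun x => ~ True); [tauto|]. apply bc_compl, bc_all.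
Qed.
Lemma bc_and (A B : (nat -> bool) -> Prop) :
  borel_cantor A -> borel_cantor B -> borel_cantor (fun x => A x /\ B x).
Proof.
  intros HA HB.
  apply bc_ext with (A := fun x => ~ (~ A x \/ ~ B x)).
  - intros x. destruct (classic (A x)), (classic (B x)); tauto.
  - apply bc_compl, bc_or; apply bc_compl; auto.
Qed.

Definition updb (y : nat -> bool) m b := fun i => if Nat.eqb i m then b else y i.
Definition updn (g : nat -> nat) m v := fun i => if Nat.eqb i m then v else g i.

Definition fin_dep m (P : (nat->bool) -> (nat->nat) -> Prop) :=
  forall y y' g g', (forall i, i < m -> y i = y' i /\ g i = g' i) -> P y g -> P y' g'.

Lemma fin_dep_borel (Y : (nat -> bool) -> (nat -> bool)) (f : (nat -> bool) -> (nat -> nat))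
  (HbY : forall m b, borel_cantor (fun x => Y x m = b))
  (Hbf : forall m v, borel_cantor (fun x => f x m = v)) :
  forall m P, fin_dep m P -> borel_cantor (fun x => P (Y x) (f x)).
Proof.
  induction m; intros P HP.
  - destruct (classic (P (fun _ => true) (fun _ => 0))) as [H|H].
    + apply bc_ext with (A := fun _ => True); [|apply bc_all].
      intros x; split; auto; intros _. eapply HP; [|exact H]. intros i Hi; lia.
    + apply bc_ext with (A := fun _ => False); [|apply bc_none].
      intros x; split; [tauto|]. intros Hx. apply H. eapply HP; [|exact Hx]. intros i Hi; lia.
  - set (Q := fun b v => fun y g => P (updb y m b) (updn g m v)).
    assert (HQ : forall b v, borel_cantor (fun x => Q b v (Y x) (f x))).
    { intros b v. apply IHm. intros y y' g g' Hag. unfold Q. apply HP.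
      intros i Hi. unfold updb, updn. destruct (Nat.eqb i m) eqn:E; auto.
      apply Nat.eqb_neq in E. apply Hag. lia. }
    apply bc_ext with (A := fun x => exists v,
      (Y x m = true /\ f x m = v /\ Q true v (Y x) (f x)) \/
      (Y x m = false /\ f x m = v /\ Q false v (Y x) (f x))).
    + intros x. unfold Q. split.
      * intros [v [[H1 [H2 H3]]|[H1 [H2 H3]]]]; eapply HP; try exact H3;
          intros i Hi; unfold updb, updn; destruct (Nat.eqb i m) eqn:E;
          try (apply Nat.eqb_eq in E; subst; split; congruence); split; reflexivity.
      * intros H. exists (f x m). destruct (Y x m) eqn:E0; [left|right]; repeat split; auto;
          eapply HP; try exact H;
          intros i Hi; unfold updb, updn; destruct (Nat.eqb i m) eqn:E;
          try (apply Nat.eqb_eq in E; subst; split; congruence); split; reflexivity.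
    + apply bc_union. intros v. apply bc_or; apply bc_and; auto; apply bc_and; auto.
Qed.

Fixpoint cnt (y : nat -> bool) k m : nat :=
  match m with 0 => 0 | S m' => cnt y k m' + (if (k <=? m') && y m' then 1 else 0) end.
Fixpoint lst (y : nat -> bool) (g : nat -> nat) k m : list (nat*nat) :=
  match m with 0 => [] | S m' => lst y g k m' ++ (if (k <=? m') && y m' then [(m', g m')] else []) end.

Lemma cnt_dep y y' k m : (forall i, i < m -> y i = y' i) -> cnt y k m = cnt y' k m.
Proof.
  induction m; simpl; intros H; auto.
  rewrite IHm by (intros; apply H; lia). rewrite H by lia. reflexivity.
Qed.
Lemma lst_dep y y' g g' k m : (forall i, i < m -> y i = y' i /\ g i = g' i) ->
  lst y g k m = lst y' g' k m.
Proof.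
  induction m; simpl; intros H; auto.
  rewrite IHm by (intros; apply H; lia). destruct (H m) as [H1 H2]; [lia|].
  rewrite H1, H2. reflexivity.
Qed.
Lemma cnt_mono y k m m' : m <= m' -> cnt y k m <= cnt y k m'.
Proof. induction 1; simpl; lia. Qed.
Lemma cnt_unb y k : infinite_set y -> forall j, exists m, j <= cnt y k m.
Proof.
  intros Hy j. induction j.
  - exists 0; lia.
  - destruct IHj as [m Hm]. destruct (Hy (max m k)) as [p [Hp Hyp]].
    exists (S p). simpl. rewrite Hyp.
    assert (k <=? p = true) as E by (apply Nat.leb_le; lia). rewrite E. simpl.
    pose proof (cnt_mono y k m p ltac:(lia)). lia.
Qed.
Lemma lst_len y g k m : length (lst y g k m) = cnt y k m.
Proof.
  induction m; simpl; auto. rewrite length_app, IHm.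
  destruct ((k <=? m) && y m); simpl; lia.
Qed.
Lemma lst_prop y g k m p v : In (p,v) (lst y g k m) -> k <= p /\ p < m /\ y p = true /\ v = g p.
Proof.
  induction m; simpl; [tauto|]. intros H. apply in_app_or in H. destruct H as [H|H].
  - destruct (IHm H) as [? [? [? ?]]]; repeat split; auto; lia.
  - destruct (k <=? m) eqn:E1; destruct (y m) eqn:E2; simpl in H; try tauto.
    destruct H as [H|[]]. inversion H; subst. apply Nat.leb_le in E1. repeat split; auto.
Qed.
Lemma lst_nodup y g k m : NoDup (map fst (lst y g k m)).
Proof.
  induction m; simpl. constructor.
  rewrite map_app. apply NoDup_app; auto.
  - destruct ((k <=? m) && y m); simpl; repeat constructor; auto.
  - intros a Ha. apply in_map_iff in Ha. destruct Ha as [[p v] [Hp Hin]]. simpl in Hp; subst.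
    apply lst_prop in Hin.
    destruct ((k <=? m) && y m); simpl; [intros [H|[]]; lia | tauto].
Qed.

Lemma least_ex (P : nat -> Prop) n : P n -> exists m, P m /\ forall m', m' < m -> ~ P m'.
Proof.
  induction n as [n IH] using lt_wf_ind. intros Hn.
  destruct (classic (exists m', m' < n /\ P m')) as [[m' [H1 H2]]|H].
  - exact (IH m' H1 H2).
  - exists n; split; auto. intros m' Hm' Hp. apply H. eauto.
Qed.

Definition Pm (y : nat -> bool) k m := 2^k <= cnt y k m /\ forall m', m' < m -> cnt y k m' < 2^k.
Lemma Pm_ex y k : infinite_set y -> exists m, Pm y k m.
Proof.
  intros Hy. destruct (cnt_unb y k Hy (2^k)) as [m Hm].
  destruct (least_ex (fun m => 2^k <= cnt y k m) m Hm) as [m0 [H1 H2]].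
  exists m0. split; auto. intros m' Hm'. specialize (H2 m' Hm'). lia.
Qed.
Lemma Pm_uniq y k m1 m2 : Pm y k m1 -> Pm y k m2 -> m1 = m2.
Proof.
  intros [A1 B1] [A2 B2]. destruct (lt_eq_lt_dec m1 m2) as [[H|H]|H]; auto.
  - specialize (B2 _ H). lia.
  - specialize (B1 _ H). lia.
Qed.
Definition Msel (y : nat -> bool) k (H : infinite_set y) : nat :=
  proj1_sig (constructive_indefinite_description _ (Pm_ex y k H)).
Lemma Msel_spec y k H : Pm y k (Msel y k H).
Proof. unfold Msel. exact (proj2_sig _). Qed.

Fixpoint enc (l : list (nat*nat)) : nat :=
  match l with [] => 0 | a :: l' => S (Cantor.to_nat (Cantor.to_nat a, enc l')) end.
Fixpoint dec (fuel n : nat) : list (nat*nat) :=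
  match fuel with
  | 0 => []
  | S fu => match n with
            | 0 => []
            | S n' => Cantor.of_nat (fst (Cantor.of_nat n')) :: dec fu (snd (Cantor.of_nat n'))
            end
  end.
Lemma dec_enc l : forall fuel, enc l <= fuel -> dec fuel (enc l) = l.
Proof.
  induction l as [|a l IH]; intros fuel H.
  - destruct fuel; reflexivity.
  - destruct fuel as [|fu]; cbn [enc] in H; [lia|]. cbn [dec enc].
    rewrite Cantor.cancel_of_to. cbn [fst snd]. rewrite Cantor.cancel_of_to. f_equal.
    apply IH. pose proof (Cantor.to_nat_non_decreasing (Cantor.to_nat a) (enc l)). lia.
Qed.

Definition Fc (Y : (nat -> bool) -> (nat -> bool)) (f : (nat -> bool) -> (nat -> nat))
  (HY : forall x, infinite_set (Y x)) (x : nat -> bool) (k : nat) : nat :=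
  enc (lst (Y x) (f x) k (Msel (Y x) k (HY x))).

Lemma Fc_borel Y f HY (Hborel : borel_fun_prod (fun x => (Y x, f x))) :
  borel_fun_baire (Fc Y f HY).
Proof.
  assert (HbY : forall m b, borel_cantor (fun x => Y x m = b)).
  { intros m b. apply (Hborel (fun p => fst p m = b)). apply sg_base. left. exists m, b. tauto. }
  assert (Hbf : forall m v, borel_cantor (fun x => f x m = v)).
  { intros m v. apply (Hborel (fun p => snd p m = v)). apply sg_base. right. exists m, v. tauto. }
  assert (Hpre : forall n v, borel_cantor (fun x => Fc Y f HY x n = v)).
  { intros n v.
    apply bc_ext with (A := fun x => exists m,
       (fun m x => Pm (Y x) n m /\ enc (lst (Y x) (f x) n m) = v) m x).
    - intros x. unfold Fc. split.
      + intros [m [H1 H2]]. rewrite <- (Pm_uniq _ _ _ _ H1 (Msel_spec (Y x) n (HY x))). exact H2.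
      + intros H. exists (Msel (Y x) n (HY x)). split; auto. apply Msel_spec.
    - apply bc_union. intros m.
      apply (fin_dep_borel Y f HbY Hbf m (fun y g => Pm y n m /\ enc (lst y g n m) = v)).
      intros y y' g g' Hag [[H1 H2] H3].
      assert (Hc : forall m', m' <= m -> cnt y n m' = cnt y' n m').
      { intros m' Hm'. apply cnt_dep. intros i Hi. apply Hag. lia. }
      split; [split|].
      + rewrite <- Hc by lia. exact H1.
      + intros m' Hm'. rewrite <- Hc by lia. auto.
      + rewrite <- (lst_dep y y' g g' n m); auto. }
  intros B HB. unfold borel_baire in HB. induction HB.
  - destruct H as [n [k Hk]].
    apply bc_ext with (A := fun x => Fc Y f HY x n = k); [|apply Hpre].
    intros x. rewrite Hk. tauto.
  - apply bc_compl; auto.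
  - apply (bc_union (fun n x => A n (Fc Y f HY x))); auto.
  - eapply bc_ext; [|exact IHHB]. intros x; apply H.
Qed.

Fixpoint lookup (n : nat) (l : list (nat*nat)) : option nat :=
  match l with [] => None | (p,v)::l' => if Nat.eqb p n then Some v else lookup n l' end.
Fixpoint gs (claim : nat -> list (nat*nat)) n j : option nat :=
  match j with
  | 0 => None
  | S j' => match gs claim n j' with Some v => Some v | None => lookup n (claim j') end
  end.
Definition gfun claim n := match gs claim n (S n) with Some v => v | None => 0 end.

Lemma lookup_some n l v : lookup n l = Some v -> In (n,v) l.
Proof.
  induction l as [|[p w] l IH]; simpl; [discriminate|].
  destruct (Nat.eqb p n) eqn:E; intros H.
  - apply Nat.eqb_eq in E; inversion H; subst; auto.
  - auto.
Qed.
Lemma lookup_in n l : In n (map fst l) -> lookup n l <> None.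
Proof.
  induction l as [|[p w] l IH]; simpl; [tauto|].
  destruct (Nat.eqb p n) eqn:E; [discriminate|].
  apply Nat.eqb_neq in E. intros [H|H]; [congruence|auto].
Qed.
Lemma gs_none claim n j : (forall k, k < j -> lookup n (claim k) = None) -> gs claim n j = None.
Proof.
  induction j; simpl; auto. intros H. rewrite IHj by auto. apply H; lia.
Qed.
Lemma gs_hit claim n k v j : (forall k', k' < k -> lookup n (claim k') = None) ->
  lookup n (claim k) = Some v -> k < j -> gs claim n j = Some v.
Proof.
  intros H1 H2. induction j; intros Hj; [lia|]. simpl.
  destruct (Nat.eq_dec k j) as [->|Hne].
  - rewrite gs_none by auto. auto.
  - rewrite IHj by lia. reflexivity.
Qed.

Fixpoint U (claim : nat -> list (nat*nat)) k : list nat :=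
  match k with 0 => [] | S j => U claim j ++ map fst (claim j) end.
Lemma U_in claim k k' p : k' < k -> In p (map fst (claim k')) -> In p (U claim k).
Proof.
  induction k; intros Hk Hp; [lia|]. simpl. apply in_or_app.
  destruct (Nat.eq_dec k' k) as [->|Hne]; [right; auto | left; apply IHk; auto; lia].
Qed.
Lemma U_len claim (Hlen : forall k, length (claim k) <= 2^k) k : length (U claim k) + 1 <= 2^k.
Proof.
  induction k; simpl; [lia|]. rewrite length_app, length_map.
  specialize (Hlen k). lia.
Qed.

Lemma key (claim : nat -> list (nat*nat)) (Hlen : forall k, length (claim k) <= 2^k)
  k (h : nat -> nat) (Hck : forall p v, In (p,v) (claim k) -> k <= p /\ v = h p)
  (Hnd : NoDup (map fst (claim k))) (Hlenk : length (claim k) = 2^k) :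
  exists p v, In (p,v) (claim k) /\ gfun claim p = h p.
Proof.
  destruct (classic (exists p, In p (map fst (claim k)) /\ gfun claim p = h p)) as [[p [Hp Hg]]|Hno].
  - apply in_map_iff in Hp. destruct Hp as [[q v] [Hq Hin]]. simpl in Hq; subst p.
    exists q, v; auto.
  - exfalso.
    assert (Hinc : incl (map fst (claim k)) (U claim k)).
    { intros p Hp.
      destruct (classic (exists k', k' < k /\ lookup p (claim k') <> None)) as [[k' [Hk' Hl]]|Hn].
      - apply (U_in claim k k'); auto.
        destruct (lookup p (claim k')) as [w|] eqn:E; [|congruence].
        apply lookup_some in E. apply in_map_iff. exists (p,w); auto.
      - exfalso. apply Hno. exists p. split; auto.
        destruct (lookup p (claim k)) as [w|] eqn:E; [|exact (False_ind _ (lookup_in _ _ Hp E))].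
        pose proof (lookup_some _ _ _ E) as Hin. destruct (Hck _ _ Hin) as [Hkp Hw].
        unfold gfun. rewrite (gs_hit claim p k w (S p)); auto; [|lia].
        intros k' Hk'. destruct (lookup p (claim k')) eqn:E'; auto.
        exfalso. apply Hn. exists k'. split; auto. congruence. }
    pose proof (NoDup_incl_length Hnd Hinc) as HL.
    rewrite length_map in HL. pose proof (U_len claim Hlen k). lia.
Qed.

Lemma in_firstn {A} n (l : list A) a : In a (firstn n l) -> In a l.
Proof.
  intros H. rewrite <- (firstn_skipn n l). apply in_or_app. auto.
Qed.
Lemma nodup_firstn {A} n (l : list A) : NoDup l -> NoDup (firstn n l).
Proof.
  intros H. rewrite <- (firstn_skipn n l) in H. eapply NoDup_app_remove_r; eauto.
Qed.

Theorem lemma2p5 (X : (nat -> bool) -> Prop) (HX : nice X)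
  (Y : (nat -> bool) -> (nat -> bool)) (f : (nat -> bool) -> (nat -> nat))
  (HY : forall x, infinite_set (Y x))
  (Hborel : borel_fun_prod (fun x => (Y x, f x))) :
  exists g : nat -> nat, forall x, X x ->
    forall N, exists n, N <= n /\ Y x n = true /\ f x n = g n.
Proof.
  destruct (HX (Fc Y f HY) (Fc_borel Y f HY Hborel)) as [g' Hg'].
  set (claim := fun k => firstn (2^k) (dec (g' k) (g' k))).
  exists (gfun claim).
  intros x Hx N.
  destruct (Hg' x Hx N) as [k [HNk Hk]].
  set (L := lst (Y x) (f x) k (Msel (Y x) k (HY x))).
  assert (Hc : claim k = firstn (2^k) L).
  { unfold claim. rewrite <- Hk. unfold Fc. rewrite dec_enc; auto. }
  assert (HL : forall p v, In (p,v) (claim k) -> k <= p /\ Y x p = true /\ v = f x p).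
  { intros p v H. rewrite Hc in H. apply in_firstn in H. apply lst_prop in H. tauto. }
  destruct (key claim (fun j => firstn_le_length _ _) k (f x)) as [p [v [Hin Hg]]].
  - intros p v H. destruct (HL p v H) as [? [? ?]]; auto.
  - rewrite Hc. unfold L. rewrite <- firstn_map. apply nodup_firstn, lst_nodup.
  - rewrite Hc, length_firstn. unfold L. rewrite lst_len.
    destruct (Msel_spec (Y x) k (HY x)) as [H1 _]. lia.
  - destruct (HL p v Hin) as [H1 [H2 H3]]. exists p. repeat split; auto; lia.
Qed.
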